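(* Under the hypotheses of Theorem 7.3 (positive integers $a,d,r,h,n$, $r\geq 2$, $\gcd(a,d)=\gcd(a,r)=1$, $d>hn(r-1)$, $a_0=a$, $a_{k+1}=ha+r^kd$ for $0\leq k\leq n$, $\{a_0,\dots,a_{n+1}\}$ minimally generating $\mathfrak{S}_{n+2}$), every nonzero element $\omega(i)=\ell_iha+id$ ($1\leq i\leq a-1$) of $\mathrm{Ap}(\mathfrak{S}_{n+2},a)$ has a unique expression $\omega(i)=\sum_{k=0}^{n}c_{k+1}a_{k+1}$ with $c_{k+1}\in\mathbb{N}$; namely $(c_1,\dots,c_{n+1})$ is the digit vector of the $r$-adic representation of $i$ up to order $n$.
   Context: The $r$-adic representation of $i$ up to order $n$ is the unique expression $i=\sum_{k=0}^{n}\alpha_kr^k$ with nonnegative integers $\alpha_k$, $0\leq\alpha_k\leq r-1$ for $k\leq n-1$ and $\alpha_n$ unrestricted; $\ell_i=\sum_k\alpha_k$. *)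

(* Defs.v *)
From mathcomp Require Import all_boot.
Set Implicit Arguments. Unset Strict Implicit. Unset Printing Implicit Defensive.

Definition in_semigroup (m : nat) (gens : 'I_m -> nat) (x : nat) : Prop :=
  exists c : 'I_m -> nat, x = \sum_(i < m) c i * gens i.

Definition minimal_gens (m : nat) (gens : 'I_m -> nat) : Prop :=
  forall j : 'I_m,
    ~ (exists c : 'I_m -> nat, c j = 0 /\ gens j = \sum_(i < m) c i * gens i).

Definition gens_S (a d r h n : nat) (k : 'I_n.+2) : nat :=
  if val k == 0 then a else h * a + r ^ (val k).-1 * d.
Arguments gens_S : clear implicits.

Definition radic_digit (r n i k : nat) : nat :=
  if k < n then (i %/ r ^ k) %% r else i %/ r ^ n.

Definition ell (r n i : nat) : nat := \sum_(k < n.+1) radic_digit r n i k.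

Definition omega (a d r h n i : nat) : nat := ell r n i * h * a + i * d.

(* Main.v *)
Require Import Defs.
From mathcomp Require Import all_boot.
From mathcomp Require Import zify.

Lemma rdS r n i k : radic_digit r n.+1 i k.+1 = radic_digit r n (i %/ r) k.
Proof. by rewrite /radic_digit ltnS !expnS !divnMA. Qed.

Lemma rd0 r n i : radic_digit r n.+1 i 0 = i %% r.
Proof. by rewrite /radic_digit /= expn0 divn1. Qed.

Lemma ell_S r n i : ell r n.+1 i = i %% r + ell r n (i %/ r).
Proof.
rewrite /ell big_ord_recl rd0; congr (_ + _).
by apply: eq_bigr => k _; rewrite lift0 rdS.
Qed.

Lemma digit_sum r n i : \sum_(k < n.+1) radic_digit r n i k * r ^ k = i.
Proof.
elim: n i => [|n IH] i.
  by rewrite big_ord1 /radic_digit /= expn0 divn1 muln1.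
rewrite big_ord_recl rd0 expn0 muln1.
under eq_bigr => k _ do rewrite lift0 rdS expnS mulnCA.
by rewrite -big_distrr /= IH addnC mulnC -divn_eq.
Qed.

Lemma uniq_digits r (hr : 2 <= r) n : forall i (c : nat -> nat),
  \sum_(k < n.+1) c k * r ^ k = i ->
  ell r n i <= \sum_(k < n.+1) c k /\
  (\sum_(k < n.+1) c k = ell r n i -> forall k, k < n.+1 -> c k = radic_digit r n i k).
Proof.
elim: n => [|n IH] i c.
  rewrite /ell !big_ord1 expn0 muln1 /radic_digit /= expn0 divn1 => Hi.
  by split=> [|_ k]; rewrite ?Hi // ltnS leqn0 => /eqP ->.
rewrite big_ord_recl expn0 muln1.
under eq_bigr => k _ do rewrite lift0 expnS mulnCA.
rewrite -big_distrr /= => Hi.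
set U := \sum_(k < n.+1) _ in Hi.
set m := c 0 %/ r.
pose c' k := c k.+1 + (k == 0) * m.
have Hc' : \sum_(k < n.+1) c' k * r ^ k = i %/ r.
  rewrite /c'.
  under eq_bigr => k _ do rewrite mulnDl.
  rewrite big_split /= -/U.
  rewrite [X in _ + X]big_ord_recl /= mul1n expn0 muln1 big1; last first.
    by move=> k _; rewrite !mul0n.
  have r0 : 0 < r by lia.
  by rewrite -Hi [c 0 + _]addnC [r * U]mulnC divnMDl // addn0 addnC.
have [Hle Heq] := IH _ _ Hc'.
have Sc' : \sum_(k < n.+1) c' k = \sum_(k < n.+1) c k.+1 + m.
  rewrite /c' big_split /=; congr (_ + _).
  rewrite big_ord_recl /= mul1n big1 ?addn0 // => k _.
rewrite big_ord_recl ell_S.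
under eq_bigr => k _ do rewrite lift0.
rewrite Sc' in Hle Heq.
set S := \sum_(k < n.+1) c k.+1 in Hle Heq Sc' *.
have Hmod : i %% r = c 0 %% r by rewrite -Hi addnC mulnC modnMDl.
have Hdiv := divn_eq (c 0) r; rewrite -/m in Hdiv.
have mr : 2 * m <= m * r by rewrite mulnC; apply: leq_mul.
have -> : c ord0 = c 0 by [].
split; first by lia.
move=> Heq'.
have m0 : m = 0 by lia.
have EQ : S + m = ell r n (i %/ r) by lia.
move=> [|k] Hk.
  rewrite rd0; lia.
rewrite rdS -(Heq EQ k Hk) /c' m0 muln0 addn0 //.
Qed.

Lemma Hsum (a d r h n : nat) (c0 : nat -> nat) :
  \sum_(k < n.+1) c0 k * (h * a + r ^ k * d) =
  (\sum_(k < n.+1) c0 k) * h * a + (\sum_(k < n.+1) c0 k * r ^ k) * d.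
Proof.
rewrite -mulnA !big_distrl -big_split /=; apply: eq_bigr => k _.
by rewrite mulnDr !mulnA.
Qed.

Theorem lemma7p4 (a d r h n : nat) :
  0 < a -> 0 < d -> 0 < h -> 0 < n -> 2 <= r ->
  coprime a d -> coprime a r -> h * n * (r - 1) < d ->
  minimal_gens (gens_S a d r h n) ->
  forall i : nat, 1 <= i <= a - 1 ->
  forall c : 'I_n.+1 -> nat,
    omega a d r h n i = \sum_(k < n.+1) c k * (h * a + r ^ k * d) <->
    (forall k : 'I_n.+1, c k = radic_digit r n i k).
Proof.
move=> a0 d0 h0 n0 r2 cad car hd _ i /andP[i1 ia] c.
pose cc := fun k => c (inord k).
have Ecc : forall k : 'I_n.+1, c k = cc k by move=> k; rewrite /cc inord_val.
split; last first.
  move=> H; rewrite /omega (eq_bigr (fun k : 'I_n.+1 => radic_digit r n i k * (h*a + r^k*d))); last first.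
    by move=> k _; rewrite H.
  by rewrite (Hsum a d r h n (radic_digit r n i)) digit_sum.
move=> E.
rewrite (eq_bigr (fun k : 'I_n.+1 => cc k * (h*a + r^k*d))) in E; last by move=> k _; rewrite Ecc.
rewrite Hsum /omega in E.
set L := \sum_(k < n.+1) cc k in E.
set J := \sum_(k < n.+1) cc k * r ^ k in E.
set l := ell r n i in E.
have R0 : 0 < r ^ n by rewrite expn_gt0; lia.
have JL : J <= L * r ^ n.
  rewrite /J /L big_distrl; apply: leq_sum => k _.
  by rewrite leq_mul2l leq_pexp2l ?(leq_trans _ r2) ?orbT // -ltnS ltn_ord.
have lR : l * r ^ n <= n * (r - 1) * r ^ n + i.
  have A : l = \sum_(k < n) radic_digit r n i (widen_ord (leqnSn n) k) + i %/ r ^ n.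
    by rewrite /l /ell big_ord_recr /= /radic_digit ltnn.
  have B : \sum_(k < n) radic_digit r n i (widen_ord (leqnSn n) k) <= n * (r - 1).
    rewrite -[n in X in _ <= X * _]card_ord -sum_nat_const; apply: leq_sum => k _.
    rewrite /radic_digit /= ltn_ord.
    have : (i %/ r ^ k) %% r < r by rewrite ltn_mod; lia.
    lia.
  rewrite A mulnDl.
  have C := divn_eq i (r ^ n).
  have D : (\sum_(k < n) radic_digit r n i (widen_ord (leqnSn n) k)) * r ^ n <= n * (r - 1) * r ^ n.
    by rewrite leq_mul2r B orbT.
  lia.
have Ji : J = i.
  case: (leqP i J) => Hij.
    have e1 : (J - i) * d = (l - L) * h * a by rewrite !mulnBl; lia.
    have lL : l - L <= n * (r - 1).
      have : (l - L) * r ^ n <= n * (r - 1) * r ^ n by rewrite mulnBl; move: lR JL Hij; set N := n * (r - 1) * r ^ n; lia.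
      by rewrite leq_pmul2r.
    have lt : (J - i) * d < a * d.
      rewrite e1 (mulnC a d) ltn_pmul2r //.
      have : (l - L) * h <= n * (r - 1) * h by rewrite leq_mul2r lL orbT.
      lia.
    rewrite ltn_pmul2r // in lt.
    have dv : a %| J - i by rewrite -(Gauss_dvdl (J - i) cad) e1 dvdn_mull.
    case: (posnP (J - i)) => [|p]; first by lia.
    have := dvdn_leq p dv; lia.
  have e1 : (i - J) * d = (L - l) * h * a by rewrite !mulnBl; lia.
  have dv : a %| i - J by rewrite -(Gauss_dvdl (i - J) cad) e1 dvdn_mull.
  have p : 0 < i - J by lia.
  have := dvdn_leq p dv; lia.
have Ll : L = l.
  have : L * (h * a) = l * (h * a) by rewrite !mulnA; lia.
  by move/eqP; rewrite eqn_pmul2r ?muln_gt0 ?h0 ?a0 // => /eqP.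
have [_ U] := uniq_digits r r2 n i cc Ji.
by move=> k; rewrite Ecc; apply: U; [exact: Ll | exact: ltn_ord].
Qed.
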